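(* Let $G$ be a connected graph on at least three vertices that has no pair of open twins of degree $1$ (i.e., no two distinct leaves adjacent to the same vertex). Then $G$ admits a minimum-size locating-dominating set $S$ containing no leaf of $G$.
   Context: All graphs are finite and simple. For a vertex $v$, $N(v)$ is its open neighbourhood and $N[v]=N(v)\cup\{v\}$. For $S\subseteq V(G)$, $I(v)=N[v]\cap S$. A set $S\subseteq V(G)$ is locating-dominating if every vertex $v$ has $I(v)\neq\emptyset$ and $I(u)\neq I(v)$ for all distinct $u,v\in V(G)\setminus S$. Two distinct vertices $u,v$ are open twins if $N(u)=N(v)$; they are open twins of degree $d$ if moreover $|N(u)|=d$. A leaf is a vertex of degree $1$. *)

(* Defs.v *)
From mathcomp Require Import all_boot.
Set Implicit Arguments. Unset Strict Implicit. Unset Printing Implicit Defensive.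

Definition simple_graph (T : finType) (e : rel T) : Prop :=
  symmetric e /\ irreflexive e.

Definition onbhd (T : finType) (e : rel T) (v : T) : {set T} := [set u | e v u].
Definition cnbhd (T : finType) (e : rel T) (v : T) : {set T} := v |: onbhd e v.

Definition ident (T : finType) (e : rel T) (S : {set T}) (v : T) : {set T} :=
  cnbhd e v :&: S.

Definition locating_dominating (T : finType) (e : rel T) (S : {set T}) : Prop :=
  (forall v : T, ident e S v != set0) /\
  (forall u v : T, u \notin S -> v \notin S -> u != v -> ident e S u != ident e S v).

Definition min_locating_dominating (T : finType) (e : rel T) (S : {set T}) : Prop :=
  locating_dominating e S /\
  forall S' : {set T}, locating_dominating e S' -> #|S| <= #|S'|.

Definition is_leaf (T : finType) (e : rel T) (v : T) : bool := #|onbhd e v| == 1.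

Definition open_twins_deg (T : finType) (e : rel T) (d : nat) (u v : T) : Prop :=
  u != v /\ onbhd e u = onbhd e v /\ #|onbhd e u| = d.

Definition connected_graph (T : finType) (e : rel T) : Prop :=
  forall x y : T, connect e x y.

(* Main.v *)
Require Import Defs.
From mathcomp Require Import all_boot.
From mathcomp Require Import zify.
Set Implicit Arguments. Unset Strict Implicit. Unset Printing Implicit Defensive.

Section S.
Variables (T : finType) (e : rel T).
Hypothesis sym : symmetric e.
Hypothesis irr : irreflexive e.

Definition ldb (S : {set T}) : bool :=
  [forall v, ident e S v != set0] &&
  [forall u, forall v, (u \notin S) && (v \notin S) && (u != v) ==> (ident e S u != ident e S v)].

Lemma ldbP S : reflect (locating_dominating e S) (ldb S).
Proof.
apply: (iffP andP) => [[/forallP H1 /forallP H2]|[H1 H2]]; split.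
- by [].
- move=> u v Hu Hv Huv; move: (H2 u) => /forallP/(_ v); rewrite Hu Hv Huv; exact.
- by apply/forallP.
- apply/forallP => u; apply/forallP => v; apply/implyP => /andP[/andP[Hu Hv] Huv].
  exact: H2.
Qed.

Definition leaves (S : {set T}) := #|[set v in S | is_leaf e v]|.

Lemma in_cnbhd u x : (x \in cnbhd e u) = (x == u) || e u x.
Proof. by rewrite /cnbhd !inE. Qed.

Lemma l_notin l w u : onbhd e l = [set w] -> u != l -> u != w -> l \notin cnbhd e u.
Proof.
move=> Hl Hul Huw; rewrite in_cnbhd eq_sym (negbTE Hul) /=; apply/negP => Hul'.
have : u \in onbhd e l by rewrite inE sym.
by rewrite Hl inE (negbTE Huw).
Qed.

Lemma w_nonleaf l w : connected_graph e -> 3 <= #|T| ->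
  onbhd e l = [set w] -> ~~ is_leaf e w.
Proof.
move=> conn H3 Hl; apply/negP => /cards1P[z Hz].
have elw : e l w.
  have : w \in onbhd e l by rewrite Hl set11.
  by rewrite inE.
have : l \in onbhd e w by rewrite inE sym.
rewrite Hz inE => /eqP Hzl; subst z.
set a := [set l; w].
have cl : closed e a.
  move=> x y exy.
  have H : forall x y, e x y -> x \in a -> y \in a.
    move=> x0 y0 e0; rewrite !inE => /orP[]/eqP Ex; subst x0.
    - have : y0 \in onbhd e l by rewrite inE.
      by rewrite Hl inE => ->; rewrite orbT.
    - have : y0 \in onbhd e w by rewrite inE.
      by rewrite Hz inE => ->.
  apply/idP/idP; first exact: H.
  by apply: H; rewrite sym.
have ca : #|a| <= 2 by rewrite cards2; case: (l != w).
have [z Hz'] : exists z, z \notin a.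
  apply/existsP; rewrite -negb_forall; apply/negP => /forallP Ha.
  have cT : #|T| <= #|a| by rewrite -cardsT; apply: subset_leq_card; apply/subsetP => x _; exact: Ha.
  lia.
have := closed_connect cl (conn l z).
by rewrite !inE eqxx /= => /esym Hza; rewrite /a !inE Hza in Hz'.
Qed.

Lemma step S l w :
  (forall u v : T, ~ open_twins_deg e 1 u v) ->
  locating_dominating e S -> l \in S -> onbhd e l = [set w] -> ~~ is_leaf e w ->
  exists S', [/\ locating_dominating e S', #|S'| <= #|S| & leaves S' < leaves S].
Proof.
move=> notw [dom sep] lS Hl wnl.
have elw : e l w.
  have : w \in onbhd e l by rewrite Hl set11.
  by rewrite inE.
have lw : l != w by apply/negP => /eqP E; rewrite E irr in elw.
set Y := [set x | (x \notin S) && ((x == w) || (ident e S x == [set w]))].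
set S' := (S :\ l) :|: Y.
have YS : forall x, x \in Y -> x \notin S by move=> x; rewrite inE => /andP[].
have wS' : w \in S'.
  case wS: (w \in S); first by rewrite !inE eq_sym lw wS.
  by rewrite !inE wS eqxx andbF.
have notS : forall z, z \notin S' -> z != l -> z \notin S.
  move=> z; rewrite !inE negb_or => /andP[H _] zl; by rewrite zl in H.
have key : forall u, u != l -> l \notin cnbhd e u -> ident e S' u :&: S = ident e S u.
  move=> u ul lu; apply/setP => x; rewrite /ident !inE.
  case xS: (x \in S); rewrite ?andbF ?andbT //=.
  case xl: (x == l).
    by move/eqP: xl => xl; subst x; move: lu; rewrite in_cnbhd => /negbTE ->.
  by rewrite /= andbT.
have lS' : l \notin S'.
  by rewrite /S' in_setU in_setD1 eqxx /= inE lS.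
have identl : ident e S' l = [set w].
  apply/setP => x; rewrite /ident /cnbhd Hl in_setI in_setU1 !in_set1.
  case: (x =P l) => [->|xl] /=.
    by rewrite (negbTE lS') (negbTE lw).
  by case: (x =P w) => [->|] //=.
have Ycard : #|Y| <= 1.
  apply/card_le1_eqP => a b aY bY.
  have HY : forall x, x \in Y -> (w \notin S -> x = w) /\ (w \in S -> ident e S x = [set w]).
    move=> x xY; move: (xY); rewrite inE => /andP[xS /orP[/eqP Ex|/eqP Hx]].
      by subst x; split=> // wS; rewrite wS in xS.
    split=> // wS.
    have : w \in ident e S x by rewrite Hx set11.
    by rewrite inE (negbTE wS) andbF.
  case wS: (w \in S).
    have [_ Ha] := HY a aY; have [_ Hb] := HY b bY.
    apply/eqP; apply: contraT => ab.
    by move: (sep b a (YS b bY) (YS a aY) ab); rewrite Ha ?Hb ?wS // eqxx.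
  have [Ha _] := HY a aY; have [Hb _] := HY b bY.
  by rewrite Ha ?Hb ?wS.
exists S'; split.
- split.
  + move=> v; case: (v =P l) => [->|vl].
      by rewrite identl; apply/set0Pn; exists w; rewrite set11.
    case: (v =P w) => [->|vw].
      by apply/set0Pn; exists w; rewrite /ident /cnbhd in_setI in_setU1 eqxx wS'.
    have := key v (introN eqP vl) (l_notin Hl (introN eqP vl) (introN eqP vw)).
    move=> Hk; apply: contra (dom v) => /eqP H0.
    by rewrite -Hk H0 set0I.
  + have sepl : forall x, x \notin S' -> x != l -> ident e S' l != ident e S' x.
      move=> x xS' xl; rewrite identl; apply/negP => /eqP Hx.
      have xw : x != w by apply: contraNneq xS' => ->.
      have xS := notS x xS' xl.
      have Hk := key x xl (l_notin Hl xl xw); rewrite -Hx in Hk.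
      case wS: (w \in S).
        have xY : x \in Y.
          rewrite inE xS /= -Hk; apply/orP; right; apply/eqP/setP => y.
          by rewrite !inE; case: (y =P w) => [->|] //=; rewrite wS.
        by move: xS'; rewrite /S' in_setU xY orbT.
      move: (dom x); rewrite -Hk.
      have -> : [set w] :&: S = set0.
        by apply/setP => y; rewrite !inE; case: (y =P w) => [->|] //=; rewrite wS.
      by rewrite eqxx.
    move=> u v uS' vS' uv.
    case: (u =P l) => [ul|ul].
      subst u; apply: sepl => //; by rewrite eq_sym.
    case: (v =P l) => [vl|vl].
      subst v; rewrite eq_sym; apply: sepl => //.
    have uw : u != w by apply: contraNneq uS' => ->.
    have vw : v != w by apply: contraNneq vS' => ->.
    apply: contra (sep u v (notS u uS' (introN eqP ul)) (notS v vS' (introN eqP vl)) uv).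
    move=> /eqP H0.
    rewrite -(key u (introN eqP ul) (l_notin Hl (introN eqP ul) uw)).
    by rewrite -(key v (introN eqP vl) (l_notin Hl (introN eqP vl) vw)) H0.
- rewrite /S' cardsU (cardsD1 l S) lS. lia.
- rewrite /leaves.
  have sub : [set v in S' | is_leaf e v] \subset [set v in S | is_leaf e v] :\ l.
    apply/subsetP => v; rewrite !inE => /andP[/orP[/andP[vl vS]|vY] lv].
      by rewrite vl vS lv.
    exfalso; move: vY => /andP[vS /orP[/eqP vw|/eqP Hv]].
      by subst v; rewrite lv in wnl.
    move: lv => /cards1P[z Hz].
    have wS : w \in S.
      have : w \in ident e S v by rewrite Hv set11.
      by rewrite inE => /andP[].
    have evw : e v w.
      have : w \in ident e S v by rewrite Hv set11.
      rewrite !inE => /andP[/orP[/eqP wv|//] _]; by rewrite -wv wS in vS.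
    have : w \in onbhd e v by rewrite inE.
    rewrite Hz inE => /eqP wz; subst z.
    apply: (notw v l); split; last split.
    + by apply: contraNneq vS => ->.
    + by rewrite Hz Hl.
    + by rewrite Hz cards1.
  have := subset_leq_card sub.
  rewrite (cardsD1 l [set v in S | is_leaf e v]) !inE lS /=.
  have -> : is_leaf e l by rewrite /is_leaf Hl cards1.
  move=> H; rewrite /=. lia.
Qed.

End S.

Theorem lemma2 (T : finType) (e : rel T) :
  simple_graph e ->
  connected_graph e ->
  3 <= #|T| ->
  (forall u v : T, ~ open_twins_deg e 1 u v) ->
  exists S : {set T},
    min_locating_dominating e S /\ (forall v : T, v \in S -> ~~ is_leaf e v).
Proof.
move=> [sym irr] conn H3 notw.
have ldT : ldb e setT.
  apply/ldbP; split=> [v|u v]; last by rewrite inE.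
  by apply/set0Pn; exists v; rewrite !inE eqxx.
case: (arg_minnP (fun S : {set T} => #|S|) ldT) => S0 ld0 min0.
have ld0' : ldb e S0 && (#|S0| == #|S0|) by rewrite ld0 eqxx.
case: (@arg_minnP _ S0 (fun S => ldb e S && (#|S| == #|S0|)) (leaves e) ld0') => S1 /andP[ld1 /eqP c1] min1.
exists S1; split.
  split; first exact/ldbP.
  by move=> S' /ldbP H; rewrite c1; apply: min0.
move=> v vS; apply/negP => /cards1P[w Hw].
have wnl := w_nonleaf sym conn H3 Hw.
have [S' [ld' c' l']] := step sym irr notw (ldbP _ _ ld1) vS Hw wnl.
have ld'' : ldb e S' by apply/ldbP.
have : leaves e S1 <= leaves e S'.
  apply: min1; rewrite ld'' /=; apply/eqP.
  have := min0 S' ld''. lia.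
lia.
Qed.
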